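(* At every point $R\in V_N$ with $q(R)>0$, the Cartan tensor $C_{pqr}=\frac12\partial g_{pq}/\partial R^r$ of the Finsleroid metric function satisfies $$C_tC^t=\frac{N^2}{4K^2}\,g^2,$$ and, if $g\neq0$, $$C_{pqr}=\frac1N\Big(h_{pq}C_r+h_{pr}C_q+h_{qr}C_p-\frac{1}{C_sC^s}C_pC_qC_r\Big).$$
   Context: Let $N\ge2$, $V_N=\mathbb{R}^N$ with points $R=(R^1,\dots,R^N)$, $Z=R^N$; indices $a,b$ run over $1,\dots,N-1$, indices $p,q,r,s,t$ over $1,\dots,N$, repeated indices summed. Fix a symmetric positive-definite matrix $(r_{ab})$, $q(R)=\sqrt{r_{ab}R^aR^b}$. Fix $g\in(-2,2)$, $h=\sqrt{1-g^2/4}$, $G=g/h$. Define $B(g;R)=Z^2+gqZ+q^2$, $A(g;R)=Z+\frac12gq$, $\Phi(g;R)=\arctan(A/(hq))$ for $q>0$ ($\Phi=\pm\pi/2$ if $q=0$, $Z\gtrless0$), $J=e^{\frac12G\Phi}$, and $K(g;R)=\sqrt{B}\,J$. Let $g_{pq}=\frac12\partial^2K^2/\partial R^p\partial R^q$ with inverse $g^{pq}$, $R_p=\frac12\partial K^2/\partial R^p$, angular metric tensor $h_{pq}=g_{pq}-R_pR_q/K^2$, $C_p=g^{qr}C_{pqr}$, $C^p=g^{pq}C_q$. *)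

(* Defs.v *)
(* R : realType, points of V_N are row vectors 'rV[R]_(n.+1), N = n.+1 *)
From HB Require Import structures.
From mathcomp Require Import all_boot all_order all_algebra.
From mathcomp Require Import all_classical all_reals all_analysis.
Set Implicit Arguments. Unset Strict Implicit. Unset Printing Implicit Defensive.
Import Order.TTheory GRing.Theory Num.Theory.
Import numFieldNormedType.Exports.
Local Open Scope ring_scope.

Section Finsleroid.
Variables (R : realType) (n : nat).
Notation pt := 'rV[R]_(n.+1).

Definition coord (x : pt) (p : 'I_n.+1) : R := x 0 p.
Definition Zc (x : pt) : R := x 0 ord_max.
Definition aidx (a : 'I_n) : 'I_n.+1 := widen_ord (leqnSn n) a.

Definition sym_posdef (r : 'M[R]_n) : Prop :=
  r^T = r /\ forall v : 'rV[R]_n, v != 0 -> 0 < (v *m r *m v^T) 0 0.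

Definition qf (r : 'M[R]_n) (x : pt) : R :=
  Num.sqrt (\sum_(a < n) \sum_(b < n) r a b * x 0 (aidx a) * x 0 (aidx b)).

Definition hh (g : R) : R := Num.sqrt (1 - g ^+ 2 / 4).
Definition GG (g : R) : R := g / hh g.

Definition Bf (r : 'M[R]_n) (g : R) (x : pt) : R :=
  Zc x ^+ 2 + g * qf r x * Zc x + qf r x ^+ 2.
Definition Af (r : 'M[R]_n) (g : R) (x : pt) : R :=
  Zc x + g * qf r x / 2.
Definition Phi (r : 'M[R]_n) (g : R) (x : pt) : R :=
  if 0 < qf r x then atan (Af r g x / (hh g * qf r x))
  else if 0 < Zc x then pi / 2 else - (pi / 2).
Definition Jf (r : 'M[R]_n) (g : R) (x : pt) : R := expR (GG g * Phi r g x / 2).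
Definition Kf (r : 'M[R]_n) (g : R) (x : pt) : R := Num.sqrt (Bf r g x) * Jf r g x.

Definition ev (p : 'I_n.+1) : pt := delta_mx 0 p.
Definition pd (f : pt -> R) (p : 'I_n.+1) : pt -> R := fun x => 'D_(ev p) f x.

Definition K2 r g : pt -> R := fun x => Kf r g x ^+ 2.
Definition gmet r g (x : pt) (p q : 'I_n.+1) : R := pd (pd (K2 r g) q) p x / 2.
Definition gmx r g (x : pt) : 'M[R]_(n.+1) := \matrix_(p, q) gmet r g x p q.
Definition ginv r g (x : pt) : 'M[R]_(n.+1) := invmx (gmx r g x).
Definition Rlow r g (x : pt) (p : 'I_n.+1) : R := pd (K2 r g) p x / 2.
Definition hang r g (x : pt) (p q : 'I_n.+1) : R :=
  gmet r g x p q - Rlow r g x p * Rlow r g x q / K2 r g x.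
Definition Cart r g (x : pt) (p q s : 'I_n.+1) : R :=
  pd (fun y => gmet r g y p q) s x / 2.
Definition Clow r g (x : pt) (p : 'I_n.+1) : R :=
  \sum_(q < n.+1) \sum_(s < n.+1) ginv r g x q s * Cart r g x p q s.
Definition Cup r g (x : pt) (p : 'I_n.+1) : R :=
  \sum_(q < n.+1) ginv r g x p q * Clow r g x q.
Definition Csq r g (x : pt) : R := \sum_(t < n.+1) Clow r g x t * Cup r g x t.

End Finsleroid.

(* Main.v *)
Require Import Defs.
From HB Require Import structures.
From mathcomp Require Import all_boot all_order all_algebra.
From mathcomp Require Import all_classical all_reals all_analysis.
From mathcomp Require Import ring lra.
Import Order.TTheory GRing.Theory Num.Theory.
Local Open Scope ring_scope.

Module Aux.
Set Implicit Arguments. Unset Strict Implicit. Unset Printing Implicit Defensive.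
Import numFieldNormedType.Exports.
Local Open Scope ring_scope.
Local Open Scope classical_set_scope.

Section Wrap.
Variables (R : realType) (m : nat).
Notation V := 'rV[R]_m.

Lemma dM (f h : V -> R) y v df dh : is_derive y v f df -> is_derive y v h dh ->
  is_derive y v (fun z => f z * h z) (f y * dh + h y * df).
Proof. by move=> A B; have := is_deriveM A B. Qed.

Lemma dD (f h : V -> R) y v df dh : is_derive y v f df -> is_derive y v h dh ->
  is_derive y v (fun z => f z + h z) (df + dh).
Proof. by move=> A B; have := is_deriveD A B. Qed.

Lemma dB (f h : V -> R) y v df dh : is_derive y v f df -> is_derive y v h dh ->
  is_derive y v (fun z => f z - h z) (df - dh).
Proof. by move=> A B; have := is_deriveB A B. Qed.

Lemma dC (c : R) y v : is_derive y v (fun _ : V => c) 0.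
Proof. exact: is_derive_cst. Qed.

Lemma dV (f : V -> R) y v df : f y != 0 -> is_derive y v f df ->
  is_derive y v (fun z => (f z)^-1) (- (f y)^-2 * df).
Proof.
move=> f0 [d1 d2]; apply: DeriveDef; first exact: derivableV.
by rewrite deriveV // d2.
Qed.

Lemma dcomp (f : V -> R) (h : R -> R) y v df dh :
  is_derive (f y) 1 h dh -> is_derive y v f df ->
  is_derive y v (fun z => h (f z)) (dh * df).
Proof.
move=> Hh [d1 d2].
have L1 : derivable (fun t : R => f (t *: v + y)) 0 1 by exact: (iffLR (derivable1P _ _ _) d1).
have E : forall (F : V -> R), 'D_v F y = 'D_1 (fun t : R => F (t *: v + y)) 0.
  move=> F; rewrite /derive /=; congr (lim (_ @ 0^')); apply/funext => t /=.
  by rewrite addr0 scale0r add0r [_%:A]mulr1.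
have Hf : is_derive (0:R) (1:R) (fun t : R => f (t *: v + y)) df.
  by apply: DeriveDef => //; rewrite -E.
have Hh' : is_derive ((fun t : R => f (t *: v + y)) 0) (1:R) h dh.
  by rewrite /= scale0r add0r.
have := is_derive1_comp Hh' Hf => -[D1 D2].
apply: DeriveDef; first by apply/derivable1P.
by rewrite E.
Qed.

Lemma dpoly2 (f : V -> R) y v c d :
  (forall t : R, f (t *: v + y) = f y + t * c + t ^+ 2 * d) ->
  is_derive y v f c.
Proof.
move=> H.
have E : {near 0^', (fun h => h^-1 *: ((f \o shift y) (h *: v) - f y)) =1
          (fun h => c + h * d)}.
  near=> h => /=.
  have h0 : h != 0 by near: h; exact: nbhs_dnbhs_neq.
  rewrite H; rewrite [_ *: _]/GRing.scale /=; field; exact: h0.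
have C : (fun h : R => c + h * d) @ 0^' --> c.
  rewrite -[X in _ --> X]addr0 -[X in _ --> _ + X](mul0r d).
  apply: cvgD; first exact: cvg_cst.
  apply: cvgM; last exact: cvg_cst.
  apply: cvg_within_filter; exact: cvg_id.
have C2 : (fun h => h^-1 *: ((f \o shift y) (h *: v) - f y)) @ 0^' --> c.
  by apply: cvg_trans C; apply: near_eq_cvg; near=> h; apply/esym; near: h.
apply: DeriveDef; first by apply/cvg_ex; exists c.
exact: cvg_lim.
Unshelve. all: by end_near. Qed.

End Wrap.


Section A.
Variables (R : realType) (n : nat) (r : 'M[R]_n) (g : R).
Hypotheses (rsym : r^T = r) (g2 : -2 < g < 2).
Notation pt := 'rV[R]_(n.+1).

Definition Wf (u z : pt) : R :=
  \sum_(a < n) \sum_(b < n) r a b * u 0 (aidx a) * z 0 (aidx b).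

Lemma qfE z : qf r z = Num.sqrt (Wf z z). Proof. by []. Qed.

Lemma Wlin2 u t z1 z2 : Wf u (t *: z1 + z2) = t * Wf u z1 + Wf u z2.
Proof.
rewrite /Wf mulr_sumr -big_split; apply: eq_bigr => a _ /=.
rewrite mulr_sumr -big_split; apply: eq_bigr => b _ /=.
rewrite !mxE; ring.
Qed.

Lemma Wlin1 u t z1 z2 : Wf (t *: z1 + z2) u = t * Wf z1 u + Wf z2 u.
Proof.
rewrite /Wf mulr_sumr -big_split; apply: eq_bigr => a _ /=.
rewrite mulr_sumr -big_split; apply: eq_bigr => b _ /=.
rewrite !mxE; ring.
Qed.

Lemma Wsym u z : Wf u z = Wf z u.
Proof.
rewrite /Wf exchange_big; apply: eq_bigr => a _; apply: eq_bigr => b _ /=.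
have -> : r b a = r a b by rewrite -{1}rsym mxE.
ring.
Qed.

Lemma dcoord c y (v : pt) : is_derive y v (fun z : pt => z 0 c) (v 0 c).
Proof.
apply: (@dpoly2 _ _ _ _ _ _ 0) => t; rewrite !mxE; ring.
Qed.

Lemma dW u y (v : pt) : is_derive y v (fun z => Wf u z) (Wf u v).
Proof. apply: (@dpoly2 _ _ _ _ _ _ 0) => t; rewrite Wlin2; ring. Qed.

Lemma dQ y (v : pt) : is_derive y v (fun z => Wf z z) (2 * Wf v y).
Proof.
apply: (@dpoly2 _ _ _ _ _ _ (Wf v v)) => t.
rewrite Wlin1 !Wlin2 (Wsym y v); ring.
Qed.

Lemma hh_gt0 : 0 < hh g.
Proof.
rewrite /hh sqrtr_gt0; case/andP: g2 => g1 g3.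
have : g ^+ 2 < 4 by rewrite expr2; nra.
move=> H; lra.
Qed.

Lemma hh_sq : hh g ^+ 2 = 1 - g ^+ 2 / 4.
Proof. rewrite /hh sqr_sqrtr //; have := hh_gt0; rewrite /hh sqrtr_gt0; lra. Qed.

Lemma Q_gt0 z : 0 < qf r z -> 0 < Wf z z.
Proof. by rewrite qfE sqrtr_gt0. Qed.

Lemma q_sq z : 0 < qf r z -> qf r z ^+ 2 = Wf z z.
Proof. move=> h; rewrite qfE sqr_sqrtr // ltW //; exact: Q_gt0. Qed.

Lemma B_gt0 z : 0 < qf r z -> 0 < Bf r g z.
Proof.
move=> hq; rewrite /Bf.
have h2 := hh_sq; have h0 := hh_gt0.
have -> : Zc z ^+ 2 + g * qf r z * Zc z + qf r z ^+ 2 =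
  (Zc z + g * qf r z / 2) ^+ 2 + hh g ^+ 2 * qf r z ^+ 2 by rewrite h2; field.
apply: ltr_wpDl; first exact: sqr_ge0.
by apply: mulr_gt0; apply: exprn_gt0.
Qed.

Lemma dq y (v : pt) : 0 < qf r y ->
  is_derive y v (fun z => qf r z) (Wf v y / qf r y).
Proof.
move=> hq; have hQ := Q_gt0 hq.
apply: is_derive_eq; first exact: (@dcomp _ _ (fun z => Wf z z) _ _ _ _ _ (is_derive1_sqrt hQ) (dQ y v)).
rewrite -qfE; field; exact: lt0r_neq0.
Qed.

Lemma dX2 (f : pt -> R) y v df : is_derive y v f df ->
  is_derive y v (fun z => f z ^+ 2) (2 * f y * df).
Proof.
move=> H; have -> : (fun z => f z ^+ 2) = (fun z => f z * f z).
  by apply/funext => z; rewrite expr2.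
apply: (is_derive_eq (dM H H)).
ring.
Qed.

Definition Ph z := atan (Af r g z / (hh g * qf r z)).
Definition J2 z := expR (GG g * Ph z).

Lemma dZc y (v : pt) : is_derive y v (fun z => Zc z) (v 0 ord_max).
Proof. exact: dcoord. Qed.

Lemma dA y (v : pt) : 0 < qf r y ->
  is_derive y v (fun z => Af r g z) (v 0 ord_max + g * (Wf v y / qf r y) / 2).
Proof.
move=> hq.
have := dD (dZc y v) (dM (dM (dC g y v) (dq v hq)) (dC 2^-1 y v)).
rewrite /Af. move/is_derive_eq; apply. rewrite /=; ring.
Qed.

Lemma onepa2 y : 0 < qf r y ->
  1 + (Af r g y / (hh g * qf r y)) ^+ 2 = Bf r g y / (hh g ^+ 2 * qf r y ^+ 2).
Proof.
move=> hq; have h0 := hh_gt0; have hB := B_gt0 hq.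
have q0 : qf r y != 0 by exact: lt0r_neq0.
have hn0 : hh g != 0 by exact: lt0r_neq0.
transitivity ((hh g ^+ 2 * qf r y ^+ 2 + Af r g y ^+ 2) / (hh g ^+ 2 * qf r y ^+ 2)).
  by field; rewrite q0 hn0.
by rewrite hh_sq /Bf /Af; congr (_ / _); field.
Qed.

Lemma dPh y (v : pt) : 0 < qf r y ->
  is_derive y v Ph
   (hh g * (qf r y * v 0 ord_max - Zc y * Wf v y / qf r y) / Bf r g y).
Proof.
move=> hq; have h0 := hh_gt0; have hB := B_gt0 hq.
have q0 : qf r y != 0 by exact: lt0r_neq0.
have hn0 : hh g != 0 by exact: lt0r_neq0.
have B0 : Bf r g y != 0 by exact: lt0r_neq0.
have hq0 : hh g * qf r y != 0 by rewrite mulf_neq0.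
apply: is_derive_eq.
  exact: (@dcomp _ _ (fun z => Af r g z / (hh g * qf r z)) _ _ _ _ _
    (is_derive1_atan _) (dM (dA v hq) (dV hq0 (dM (dC _ _ _) (dq v hq))))).
rewrite onepa2 //. rewrite /Af /Bf in B0 *.
by field; rewrite q0 hn0 B0.
Qed.

Lemma dJ2 y (v : pt) : 0 < qf r y ->
  is_derive y v J2
   (J2 y * (g * (qf r y * v 0 ord_max - Zc y * Wf v y / qf r y) / Bf r g y)).
Proof.
move=> hq; have h0 := hh_gt0; have hB := B_gt0 hq.
have q0 : qf r y != 0 by exact: lt0r_neq0.
have hn0 : hh g != 0 by exact: lt0r_neq0.
have B0 : Bf r g y != 0 by exact: lt0r_neq0.
apply: is_derive_eq.
  exact: (@dcomp _ _ (fun z => GG g * Ph z) _ _ _ _ _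
    (is_derive_expR _) (dM (dC _ _ _) (dPh v hq))).
rewrite /J2 /GG; by field; rewrite hn0 B0 q0.
Qed.

Lemma dBf y (v : pt) : 0 < qf r y ->
  is_derive y v (fun z => Bf r g z)
   ((2 * Zc y + g * qf r y) * v 0 ord_max + (g * Zc y + 2 * qf r y) * (Wf v y / qf r y)).
Proof.
move=> hq; apply: is_derive_eq.
  exact: (dD (dD (dX2 (dZc y v)) (dM (dM (dC _ _ _) (dq v hq)) (dZc y v)))
             (dX2 (dq v hq))).
rewrite /=; ring.
Qed.

Lemma dBJ y (v : pt) : 0 < qf r y ->
  is_derive y v (fun z => Bf r g z * J2 z)
   (2 * J2 y * (Wf v y + (Zc y + g * qf r y) * v 0 ord_max)).
Proof.
move=> hq; have hB := B_gt0 hq.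
have q0 : qf r y != 0 by exact: lt0r_neq0.
have B0 : Bf r g y != 0 by exact: lt0r_neq0.
apply: is_derive_eq; first exact: (dM (dBf v hq) (dJ2 v hq)).
rewrite /Bf in B0 *; by field; rewrite B0 q0.
Qed.

Lemma cont_sum k (F : 'I_k -> pt -> R) (y : pt) :
  (forall i, {for y, continuous (F i)}) ->
  {for y, continuous (fun z => \sum_(i < k) F i z)}.
Proof.
elim: k F => [|k IH] F H.
  have -> : (fun z => \sum_(i < 0) F i z) = (fun _ => 0).
    by apply/funext => z; rewrite big_ord0.
  exact: cst_continuous.
have -> : (fun z => \sum_(i < k.+1) F i z) =
   (fun z => \sum_(i < k) F (widen_ord (leqnSn k) i) z + F ord_max z).
  by apply/funext => z; rewrite big_ord_recr.
exact: (cvgD (IH (fun i => F (widen_ord (leqnSn k) i)) (fun i => H _)) (H ord_max)).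
Qed.

Lemma Q_cont (y : pt) : {for y, continuous (fun z : pt => Wf z z)}.
Proof.
apply: (@cont_sum n (fun a z => \sum_(b < n) r a b * z 0 (aidx a) * z 0 (aidx b))) => a.
apply: (@cont_sum n (fun b z => r a b * z 0 (aidx a) * z 0 (aidx b))) => b.
have c1 := @coord_continuous R 1 n.+1 0 (aidx a) y.
have c3 := @coord_continuous R 1 n.+1 0 (aidx b) y.
have c2 : (fun z : pt => r a b) @ y --> r a b.
  apply: cvg_cst; exact: nbhs_filter.
exact: (cvgM (cvgM c2 c1) c3).
Qed.

Lemma near_pos (y : pt) : 0 < qf r y -> \forall z \near y, 0 < qf r z.
Proof.
move=> hq; have := @cvgr_gt R pt (nbhs y) (nbhs_filter y) (fun z => Wf z z) (Wf y y) (@Q_cont y) 0 (Q_gt0 hq).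
by apply: filterS => z; rewrite qfE sqrtr_gt0.
Qed.

Lemma K2_eq z : 0 < qf r z -> K2 r g z = Bf r g z * J2 z.
Proof.
move=> hq; have hB := B_gt0 hq.
rewrite /K2 /Kf /Jf /Phi hq exprMn sqr_sqrtr; last exact: ltW.
by congr (_ * _); rewrite -expRM_natl /J2 /Ph; congr expR; field.
Qed.

Definition E1f (s : 'I_n.+1) z :=
  2 * J2 z * (Wf (ev R s) z + (Zc z + g * qf r z) * (ev R s) 0 ord_max).

Lemma pdK2 y s : 0 < qf r y -> pd (K2 r g) s y = E1f s y.
Proof.
move=> hq; rewrite /pd (@near_eq_derive _ _ _ _ (fun z => Bf r g z * J2 z)).
  by have [_ ->] := dBJ (ev R s) hq.
by near=> z; apply: K2_eq; near: z; exact: near_pos.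
Unshelve. all: by end_near. Qed.

Definition eN (p : 'I_n.+1) : R := ev R p 0 ord_max.
Definition wv (z : pt) (p : 'I_n.+1) : R := Wf (ev R p) z.
Definition rho (p s : 'I_n.+1) : R := Wf (ev R p) (ev R s).

Definition Sal (q Z : R) (e w : 'I_n.+1 -> R) p s :=
  q * (e p * w s + w p * e s) - Z / q * w p * w s + q * (Z + g * q) * e p * e s.
Definition Gal (J q Z B : R) e w (rh : 'I_n.+1 -> 'I_n.+1 -> R) p s :=
  J * (rh p s + e p * e s + g / B * Sal q Z e w p s).
Definition mal (q Z B : R) (e w : 'I_n.+1 -> R) s := (q * e s - Z * w s / q) / B.
Definition dSal (q Z : R) (e w : 'I_n.+1 -> R) (rh : 'I_n.+1 -> 'I_n.+1 -> R) p t s :=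
  (w s / q) * (e p * w t + w p * e t) + q * (e p * rh t s + rh p s * e t)
  - (e s / q - Z * w s / q ^+ 3) * w p * w t - Z / q * (rh p s * w t + w p * rh t s)
  + (w s * Z / q + q * e s + 2 * g * q * (w s / q)) * e p * e t.
Definition Cal (J q Z B : R) e w rh p t s :=
  (g * mal q Z B e w s * Gal J q Z B e w rh p t
   + J * ((- g * ((2 * Z + g * q) * e s + (g * Z + 2 * q) * (w s / q)) / B ^+ 2)
            * Sal q Z e w p t
          + g / B * dSal q Z e w rh p t s)) / 2.

Definition Gx z p s := Gal (J2 z) (qf r z) (Zc z) (Bf r g z) eN (wv z) rho p s.
Definition Cx z p t s := Cal (J2 z) (qf r z) (Zc z) (Bf r g z) eN (wv z) rho p t s.

Lemma dE1 s y (v : pt) : 0 < qf r y ->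
  is_derive y v (E1f s)
   (2 * (J2 y * (g * (qf r y * v 0 ord_max - Zc y * Wf v y / qf r y) / Bf r g y))
      * (Wf (ev R s) y + (Zc y + g * qf r y) * ev R s 0 ord_max)
    + 2 * J2 y * (Wf (ev R s) v + (v 0 ord_max + g * (Wf v y / qf r y)) * ev R s 0 ord_max)).
Proof.
move=> hq; apply: (is_derive_eq (dM (dM (dC 2 y v) (dJ2 v hq))
  (dD (dW (ev R s) y v) (dM (dD (dZc y v) (dM (dC g y v) (dq v hq))) (dC _ y v))))).
ring.
Qed.

Lemma gmet_eq y p s : 0 < qf r y -> gmet r g y p s = Gx y p s.
Proof.
move=> hq; have hB := B_gt0 hq.
have q0 : qf r y != 0 by exact: lt0r_neq0.
have B0 : Bf r g y != 0 by exact: lt0r_neq0.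
rewrite /gmet /pd (@near_eq_derive _ _ _ _ (E1f s)); last first.
  by near=> z; apply: pdK2; near: z; exact: near_pos.
have [_ ->] := dE1 s (ev R p) hq.
rewrite /Gx /Gal /Sal /wv /rho /eN (Wsym (ev R s) (ev R p)).
rewrite /Bf in B0 *; by field; rewrite B0 q0.
Unshelve. all: by end_near. Qed.

Lemma Cart_eq y p t s : 0 < qf r y -> Cart r g y p t s = Cx y p t s.
Proof.
move=> hq; have hB := B_gt0 hq.
have q0 : qf r y != 0 by exact: lt0r_neq0.
have B0 : Bf r g y != 0 by exact: lt0r_neq0.
rewrite /Cart /pd (@near_eq_derive _ _ _ _ (fun z => Gx z p t)); last first.
  by near=> z; apply: gmet_eq; near: z; exact: near_pos.
set v := ev R s.
have T1 := dM (dq v hq) (dD (dM (dC (eN p) y v) (dW (ev R t) y v))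
                           (dM (dW (ev R p) y v) (dC (eN t) y v))).
have T2 := dM (dM (dM (dZc y v) (dV q0 (dq v hq))) (dW (ev R p) y v)) (dW (ev R t) y v).
have T3 := dM (dM (dM (dq v hq) (dD (dZc y v) (dM (dC g y v) (dq v hq))))
               (dC (eN p) y v)) (dC (eN t) y v).
have D := (dM (dJ2 v hq) (dD (dC (rho p t + eN p * eN t) y v)
          (dM (dM (dC g y v) (dV B0 (dBf v hq))) (dD (dB T1 T2) T3)))
          : is_derive y v (fun z => Gx z p t) _).
have [_ ->] := D.
rewrite /Cx /Cal /Gal /Sal /dSal /mal /wv /rho /eN /v.
rewrite /Bf in B0 *; by field; rewrite B0 q0.
Unshelve. all: by end_near. Qed.

End A.

Local Close Scope classical_set_scope.

Section B.
Variables (R : realType) (n : nat) (r : 'M[R]_n) (x : 'rV[R]_(n.+1)).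
Hypotheses (rsym : r^T = r) (runit : r \in unitmx).
Notation N1 := 'I_n.+1.

Definition ri := invmx r.
Lemma risym : ri^T = ri. Proof. by rewrite /ri trmx_inv rsym. Qed.
Lemma rri : r *m ri = 1%:M. Proof. exact: mulmxV. Qed.

Lemma sum_split (F : N1 -> R) : \sum_(t < n.+1) F t = \sum_(a < n) F (aidx a) + F ord_max.
Proof. by rewrite big_ord_recr. Qed.

Lemma ord_cases (p : N1) : p = ord_max \/ exists a : 'I_n, p = aidx a.
Proof.
case: (unliftP ord_max p) => [a ->|->]; last by left.
right; exists a; apply: val_inj => /=; rewrite /bump leqNgt ltn_ord /=; by [].
Qed.

Lemma aidx_max (a : 'I_n) : (aidx a == ord_max) = false.
Proof. by apply/negbTE; rewrite -val_eqE /= neq_ltn ltn_ord. Qed.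
Lemma max_aidx (a : 'I_n) : (ord_max == aidx a) = false.
Proof. by rewrite eq_sym aidx_max. Qed.
Lemma aidx_eq (a b : 'I_n) : (aidx a == aidx b) = (a == b).
Proof. by rewrite -val_eqE /= val_eqE. Qed.

Lemma evE (p c : N1) : ev R p 0 c = (c == p)%:R.
Proof. by rewrite /ev mxE eqxx. Qed.

Lemma sum_delta k (F : 'I_k -> R) a : \sum_(c < k) (c == a)%:R * F c = F a.
Proof.
rewrite (bigD1 a) //= eqxx mul1r big1 ?addr0 // => c /negbTE ->; by rewrite mul0r.
Qed.
Lemma sum_delta' k (F : 'I_k -> R) a : \sum_(c < k) F c * (a == c)%:R = F a.
Proof.
rewrite -[RHS](sum_delta F a); apply: eq_bigr => c _; by rewrite eq_sym mulrC.
Qed.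

Definition WM (M : 'M[R]_n) (u z : 'rV[R]_(n.+1)) : R :=
  \sum_(a < n) \sum_(b < n) M a b * u 0 (aidx a) * z 0 (aidx b).

Lemma WM_la M (a : 'I_n) z : WM M (ev R (aidx a)) z = \sum_(b < n) M a b * z 0 (aidx b).
Proof.
rewrite /WM -(sum_delta (fun c => \sum_(b < n) M c b * z 0 (aidx b)) a).
apply: eq_bigr => c _; rewrite mulr_sumr; apply: eq_bigr => b _.
by rewrite evE aidx_eq; ring.
Qed.
Lemma WM_lm M z : WM M (ev R ord_max) z = 0.
Proof.
rewrite /WM big1 // => a _; rewrite big1 // => b _; by rewrite evE aidx_max mulr0 mul0r.
Qed.
Lemma WM_ra M (b : 'I_n) z : WM M z (ev R (aidx b)) = \sum_(a < n) M a b * z 0 (aidx a).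
Proof.
rewrite /WM exchange_big /=.
rewrite -(sum_delta (fun c => \sum_(a < n) M a c * z 0 (aidx a)) b).
apply: eq_bigr => c _; rewrite mulr_sumr; apply: eq_bigr => a _.
by rewrite evE aidx_eq; ring.
Qed.
Lemma WM_rm M z : WM M z (ev R ord_max) = 0.
Proof.
rewrite /WM big1 // => a _; rewrite big1 // => b _; by rewrite evE aidx_max mulr0.
Qed.
Lemma WM_aa M (a b : 'I_n) : WM M (ev R (aidx a)) (ev R (aidx b)) = M a b.
Proof.
rewrite WM_la -(sum_delta' (fun c => M a c) b); apply: eq_bigr => c _.
by rewrite evE aidx_eq eq_sym.
Qed.

Definition e (p : N1) : R := eN R p.
Definition w (p : N1) : R := wv r x p.
Definition rh (p s : N1) : R := rho r p s.
Definition u (p : N1) : R := x 0 p * (1 - eN R p).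
Definition Pi (p s : N1) : R := WM ri (ev R p) (ev R s) + eN R p * eN R s.

Lemma e_a (a : 'I_n) : e (aidx a) = 0. Proof. by rewrite /e /eN evE max_aidx. Qed.
Lemma e_m : e ord_max = 1. Proof. by rewrite /e /eN evE eqxx. Qed.
Lemma u_a (a : 'I_n) : u (aidx a) = x 0 (aidx a).
Proof. by rewrite /u -/(e _) e_a subr0 mulr1. Qed.
Lemma u_m : u ord_max = 0. Proof. by rewrite /u -/(e _) e_m subrr mulr0. Qed.
Lemma w_a (a : 'I_n) : w (aidx a) = \sum_(b < n) r a b * x 0 (aidx b).
Proof. exact: WM_la. Qed.
Lemma w_m : w ord_max = 0. Proof. exact: WM_lm. Qed.
Lemma rh_aa (a b : 'I_n) : rh (aidx a) (aidx b) = r a b. Proof. exact: WM_aa. Qed.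
Lemma rh_m p : rh ord_max p = 0. Proof. exact: WM_lm. Qed.
Lemma rh_m' p : rh p ord_max = 0. Proof. exact: WM_rm. Qed.
Lemma Pi_aa (a b : 'I_n) : Pi (aidx a) (aidx b) = ri a b.
Proof. by rewrite /Pi WM_aa -!/(e _) e_a mul0r addr0. Qed.
Lemma Pi_am (a : 'I_n) : Pi (aidx a) ord_max = 0.
Proof. by rewrite /Pi WM_rm -!/(e _) e_a mul0r addr0. Qed.
Lemma Pi_ma (a : 'I_n) : Pi ord_max (aidx a) = 0.
Proof. by rewrite /Pi WM_lm -!/(e _) e_a mulr0 addr0. Qed.
Lemma Pi_mm : Pi ord_max ord_max = 1.
Proof. by rewrite /Pi WM_lm -!/(e _) e_m mulr1 add0r. Qed.

Definition xa (c : 'I_n) : R := x 0 (aidx c).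
Definition wa (c : 'I_n) : R := \sum_(b < n) r c b * xa b.

Lemma rs (a b : 'I_n) : r a b = r b a. Proof. by rewrite -{1}rsym mxE. Qed.
Lemma ris (a b : 'I_n) : ri a b = ri b a. Proof. by rewrite -{1}risym mxE. Qed.

Lemma L1 (a b : 'I_n) : \sum_(c < n) r a c * ri c b = (a == b)%:R.
Proof. by have := congr1 (fun M : 'M[R]_n => M a b) rri; rewrite !mxE. Qed.

Lemma L2 (b : 'I_n) : \sum_(a < n) wa a * ri a b = xa b.
Proof.
rewrite /wa.
transitivity (\sum_(c < n) xa c * \sum_(a < n) r c a * ri a b).
  rewrite (eq_bigr (fun a => \sum_(c < n) r a c * xa c * ri a b)); last first.
    by move=> a _; rewrite mulr_suml.
  rewrite exchange_big; apply: eq_bigr => c _; rewrite mulr_sumr.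
  by apply: eq_bigr => a _; rewrite (rs a c); ring.
rewrite -(sum_delta' (fun c => xa c) b); apply: eq_bigr => c _.
by rewrite L1 eq_sym.
Qed.

Lemma L3 : \sum_(a < n) wa a * xa a = Wf r x x.
Proof.
rewrite /Wf /wa; apply: eq_bigr => a _; rewrite mulr_suml.
by apply: eq_bigr => b _; rewrite /xa; ring.
Qed.

Lemma WMsym M (Ms : M^T = M) p s : WM M p s = WM M s p.
Proof.
rewrite /WM exchange_big; apply: eq_bigr => a _; apply: eq_bigr => b _ /=.
have -> : M b a = M a b by rewrite -{1}Ms mxE.
ring.
Qed.

Lemma rh_sym p s : rh p s = rh s p. Proof. exact: WMsym. Qed.
Lemma Pi_sym p s : Pi p s = Pi s p.
Proof. by rewrite /Pi (WMsym risym) mulrC. Qed.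

Ltac oc p := case: (ord_cases p) => [->|[? ->]].

Lemma K1 p s : \sum_(t < n.+1) rh p t * Pi t s = (p == s)%:R - e p * e s.
Proof.
rewrite sum_split rh_m' mul0r addr0.
oc p.
  rewrite big1 => [|c _]; last by rewrite rh_m mul0r.
  by oc s; rewrite ?e_m ?e_a ?eqxx ?max_aidx /= ?mulr1 ?mulr0 ?subrr ?subr0.
oc s.
  rewrite big1 => [|c _]; last by rewrite Pi_am mulr0.
  by rewrite aidx_max e_a mul0r subr0.
rewrite aidx_eq !e_a -L1 mulr0 subr0; apply: eq_bigr => c _.
by rewrite rh_aa Pi_aa.
Qed.

Lemma K2 p : \sum_(t < n.+1) rh p t * u t = w p.
Proof.
rewrite sum_split rh_m' mul0r addr0.
oc p.
  by rewrite w_m big1 // => c _; rewrite rh_m mul0r.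
by rewrite w_a; apply: eq_bigr => c _; rewrite rh_aa u_a.
Qed.

Lemma K3 p : \sum_(t < n.+1) rh p t * e t = 0.
Proof.
rewrite sum_split rh_m' mul0r addr0 big1 // => c _; by rewrite e_a mulr0.
Qed.

Lemma K4 s : \sum_(t < n.+1) e t * Pi t s = e s.
Proof.
rewrite sum_split e_m mul1r big1 ?add0r => [|c _]; last by rewrite e_a mul0r.
by oc s; rewrite ?Pi_mm ?e_m ?Pi_ma ?e_a.
Qed.

Lemma K5 : \sum_(t < n.+1) e t * u t = 0.
Proof.
rewrite sum_split e_m u_m mulr0 addr0 big1 // => c _; by rewrite e_a mul0r.
Qed.

Lemma K6 : \sum_(t < n.+1) e t * e t = 1.
Proof.
rewrite sum_split e_m mulr1 big1 ?add0r // => c _; by rewrite e_a mul0r.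
Qed.

Lemma K7 s : \sum_(t < n.+1) w t * Pi t s = u s.
Proof.
rewrite sum_split w_m mul0r addr0.
oc s.
  by rewrite u_m big1 // => c _; rewrite Pi_am mulr0.
rewrite u_a -/(xa _) -L2; apply: eq_bigr => c _; by rewrite Pi_aa w_a.
Qed.

Lemma K8 : \sum_(t < n.+1) w t * u t = Wf r x x.
Proof.
rewrite sum_split w_m mul0r addr0 -L3; apply: eq_bigr => c _.
by rewrite w_a u_a.
Qed.

Lemma K9 : \sum_(t < n.+1) w t * e t = 0.
Proof.
rewrite sum_split w_m mul0r addr0 big1 // => c _; by rewrite e_a mulr0.
Qed.

End B.


Section Sums.
Variables (R : realType) (k : nat).
Definition dt (X Y : 'I_k -> R) := \sum_(t < k) X t * Y t.
Definition HB (H : 'I_k -> 'I_k -> R) (X Y : 'I_k -> R) :=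
  \sum_(t < k) \sum_(s < k) H t s * (X t * Y s).

Lemma sum33 (X1 X2 X3 Y1 Y2 Y3 : 'I_k -> R) (a1 a2 a3 b1 b2 b3 : R) :
  \sum_(t < k) (a1 * X1 t + a2 * X2 t + a3 * X3 t) * (b1 * Y1 t + b2 * Y2 t + b3 * Y3 t)
  = a1 * b1 * dt X1 Y1 + a1 * b2 * dt X1 Y2 + a1 * b3 * dt X1 Y3
  + a2 * b1 * dt X2 Y1 + a2 * b2 * dt X2 Y2 + a2 * b3 * dt X2 Y3
  + a3 * b1 * dt X3 Y1 + a3 * b2 * dt X3 Y2 + a3 * b3 * dt X3 Y3.
Proof.
rewrite /dt !mulr_sumr -!big_split; apply: eq_bigr => t _ /=; ring.
Qed.

Lemma dsum33 (H M : 'I_k -> 'I_k -> R) (X1 X2 X3 Y1 Y2 Y3 : 'I_k -> R)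
  (c11 c12 c13 c21 c22 c23 c31 c32 c33 c0 : R) :
  \sum_(t < k) \sum_(s < k) H t s *
     (c11 * (X1 t * Y1 s) + c12 * (X1 t * Y2 s) + c13 * (X1 t * Y3 s)
    + c21 * (X2 t * Y1 s) + c22 * (X2 t * Y2 s) + c23 * (X2 t * Y3 s)
    + c31 * (X3 t * Y1 s) + c32 * (X3 t * Y2 s) + c33 * (X3 t * Y3 s)
    + c0 * M t s)
  = c11 * HB H X1 Y1 + c12 * HB H X1 Y2 + c13 * HB H X1 Y3
  + c21 * HB H X2 Y1 + c22 * HB H X2 Y2 + c23 * HB H X2 Y3
  + c31 * HB H X3 Y1 + c32 * HB H X3 Y2 + c33 * HB H X3 Y3
  + c0 * \sum_(t < k) \sum_(s < k) H t s * M t s.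
Proof.
rewrite /HB !mulr_sumr -!big_split; apply: eq_bigr => t _ /=.
rewrite !mulr_sumr -!big_split; apply: eq_bigr => s _ /=; ring.
Qed.

Lemma HB_comb (P : 'I_k -> 'I_k -> R) (U E : 'I_k -> R) (c0 c1 c2 c3 : R) X Y :
  HB (fun t s => c0 * (P t s + c1 * U t * U s + c2 * (U t * E s + E t * U s)
                        + c3 * E t * E s)) X Y
  = c0 * (HB P X Y + c1 * (dt U X * dt U Y) + c2 * (dt U X * dt E Y)
          + c2 * (dt E X * dt U Y) + c3 * (dt E X * dt E Y)).
Proof.
rewrite /HB /dt !big_distrlr /= !mulrDr !mulr_sumr -!big_split; apply: eq_bigr => t _ /=.
rewrite ?mulr_sumr -?big_split; apply: eq_bigr => s _ /=; ring.
Qed.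

Lemma trace_comb (P M : 'I_k -> 'I_k -> R) (U E : 'I_k -> R) (c0 c1 c2 c3 : R) :
  \sum_(t < k) \sum_(s < k) (c0 * (P t s + c1 * U t * U s + c2 * (U t * E s + E t * U s)
                        + c3 * E t * E s)) * M t s
  = c0 * (\sum_(t < k) \sum_(s < k) P t s * M t s
          + c1 * \sum_(t < k) \sum_(s < k) U t * U s * M t s
          + c2 * \sum_(t < k) \sum_(s < k) U t * E s * M t s
          + c2 * \sum_(t < k) \sum_(s < k) E t * U s * M t s
          + c3 * \sum_(t < k) \sum_(s < k) E t * E s * M t s).
Proof.
rewrite !mulrDr !mulr_sumr -!big_split; apply: eq_bigr => t _ /=.
rewrite ?mulr_sumr -?big_split; apply: eq_bigr => s _ /=; ring.
Qed.

End Sums.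

Section M.
Variables (R : realType) (n : nat) (r : 'M[R]_n) (g : R) (x : 'rV[R]_(n.+1)).
Hypotheses (rsym : r^T = r) (runit : r \in unitmx) (g2 : -2 < g < 2) (hq : 0 < qf r x).

Notation J := (J2 r g x).
Notation q := (qf r x).
Notation Z := (Zc x).
Notation B := (Bf r g x).
Notation E := (@e R n).
Notation W := (w r x).
Notation RH := (rh r).
Notation U := (u x).
Notation PI := (Pi r).

Definition c1 := g / B * ((Z + g * q) / q).
Definition c2 := - (g / B * q).
Definition c3 := - (g / B * (q * Z)).
Definition GI (p s : 'I_n.+1) : R :=
  J^-1 * (PI p s + c1 * U p * U s + c2 * (U p * E s + E p * U s) + c3 * E p * E s).
Definition GIm : 'M[R]_(n.+1) := \matrix_(p, s) GI p s.

Lemma J0 : J != 0. Proof. exact: lt0r_neq0 (expR_gt0 _). Qed.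
Lemma q0 : q != 0. Proof. exact: lt0r_neq0. Qed.
Lemma Bpos : 0 < B. Proof. exact: B_gt0. Qed.
Lemma B0 : Zc x ^+ 2 + g * q * Zc x + q ^+ 2 != 0.
Proof. exact: lt0r_neq0 Bpos. Qed.

Lemma G_GI : gmx r g x *m GIm = 1%:M.
Proof.
apply/matrixP => p s; rewrite !mxE.
have J0 := J0; have q0 := q0; have B0 := B0.
rewrite (eq_bigr (fun t => (J * RH p t
     + J * (E p + g / B * (q * W p + q * (Z + g * q) * E p)) * E t
     + J * (g / B * (q * E p - Z / q * W p)) * W t)
   * (J^-1 * PI t s + J^-1 * (c1 * U s + c2 * E s) * U t
      + J^-1 * (c2 * U s + c3 * E s) * E t))); last first.
  move=> t _; rewrite !mxE (gmet_eq rsym g2 p t hq) /GI /Gx /Gal /Sal /e /w /rh /c1 /c2 /c3.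
  rewrite /Bf in B0 *; by field; rewrite J0 q0 B0.
rewrite sum33 /dt (K1 runit) (K2 r x) (K3 r) (K4 r) (K5 x) (K6 R n) (K7 x rsym runit) (K8 r x) (K9 r x).
rewrite -(q_sq hq) /c1 /c2 /c3 /e /w /rh.
rewrite /Bf in B0 *. by field; rewrite J0 q0 B0.
Qed.

Lemma ginv_eq p s : ginv r g x p s = GI p s.
Proof.
have [U1 _] := mulmx1_unit G_GI.
have -> : ginv r g x = GIm.
  by rewrite /ginv -[invmx _]mulmx1 -G_GI mulmxA mulVmx // mul1mx.
by rewrite mxE.
Qed.

Lemma dt_comm (X Y : 'I_n.+1 -> R) : dt X Y = dt Y X.
Proof. by apply: eq_bigr => t _; rewrite mulrC. Qed.

Lemma HBPI (X Y : 'I_n.+1 -> R) :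
  HB PI X Y = \sum_(s < n.+1) (\sum_(t < n.+1) X t * PI t s) * Y s.
Proof.
rewrite /HB exchange_big; apply: eq_bigr => s _ /=; rewrite mulr_suml.
by apply: eq_bigr => t _; ring.
Qed.

Lemma HBPI_rh p (Y : 'I_n.+1 -> R) : HB PI (RH p) Y = Y p - E p * dt E Y.
Proof.
rewrite HBPI (eq_bigr (fun s => (p == s)%:R * Y s - E p * (E s * Y s))); last first.
  by move=> s _; rewrite (K1 runit); ring.
rewrite sumrB -mulr_sumr; congr (_ - _).
rewrite -[RHS](sum_delta Y p); apply: eq_bigr => s _; by rewrite eq_sym.
Qed.

Lemma HBPI_e (Y : 'I_n.+1 -> R) : HB PI E Y = dt E Y.
Proof. by rewrite HBPI; apply: eq_bigr => s _; rewrite (K4 r). Qed.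

Lemma HBPI_w (Y : 'I_n.+1 -> R) : HB PI W Y = dt U Y.
Proof. by rewrite HBPI; apply: eq_bigr => s _; rewrite (K7 x rsym runit). Qed.

Lemma dt_u_rh p : dt U (RH p) = W p. Proof. by rewrite dt_comm; exact: K2. Qed.
Lemma dt_u_e : dt U E = 0. Proof. by rewrite dt_comm; exact: K5. Qed.
Lemma dt_u_w : dt U W = q ^+ 2. Proof. by rewrite dt_comm (q_sq hq); exact: K8. Qed.
Lemma dt_e_rh p : dt E (RH p) = 0. Proof. by rewrite dt_comm; exact: K3. Qed.
Lemma dt_e_e : dt E E = 1. Proof. exact: K6. Qed.
Lemma dt_e_w : dt E W = 0. Proof. by rewrite dt_comm; exact: K9. Qed.
Lemma dt_e_u : dt E U = 0. Proof. exact: K5. Qed.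
Lemma dt_w_u : dt W U = q ^+ 2. Proof. by rewrite (q_sq hq); exact: K8. Qed.
Lemma dt_w_e : dt W E = 0. Proof. exact: K9. Qed.

Lemma dsplit (A Bv : 'I_n.+1 -> R) :
  \sum_(t < n.+1) \sum_(s < n.+1) A t * Bv s * RH t s =
  \sum_(t < n.+1) A t * \sum_(s < n.+1) RH t s * Bv s.
Proof. apply: eq_bigr => t _; rewrite mulr_sumr; apply: eq_bigr => s _; ring. Qed.

Lemma TPi : \sum_(t < n.+1) \sum_(s < n.+1) PI t s * RH t s = n%:R.
Proof.
rewrite exchange_big /=.
rewrite (eq_bigr (fun s => 1 - E s * E s)); last first.
  move=> s _; rewrite (eq_bigr (fun t => RH s t * PI t s)).
    by rewrite (K1 runit) eqxx.
  by move=> t _; rewrite (rh_sym rsym) mulrC.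
rewrite sumrB (K6 R n) sumr_const card_ord -[n.+1]addn1 natrD; ring.
Qed.

Lemma Tuu : \sum_(t < n.+1) \sum_(s < n.+1) U t * U s * RH t s = q ^+ 2.
Proof.
rewrite dsplit -dt_u_w; apply: eq_bigr => t _; by rewrite (K2 r x).
Qed.
Lemma Tue : \sum_(t < n.+1) \sum_(s < n.+1) U t * E s * RH t s = 0.
Proof. rewrite dsplit big1 // => t _; by rewrite (K3 r) mulr0. Qed.
Lemma Teu : \sum_(t < n.+1) \sum_(s < n.+1) E t * U s * RH t s = 0.
Proof.
rewrite dsplit (eq_bigr (fun t => W t * E t)); first exact: (K9 r x).
by move=> t _; rewrite (K2 r x) mulrC.
Qed.
Lemma Tee : \sum_(t < n.+1) \sum_(s < n.+1) E t * E s * RH t s = 0.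
Proof. rewrite dsplit big1 // => t _; by rewrite (K3 r) mulr0. Qed.

Section Coef.
Variable p : 'I_n.+1.
Definition mue := q / B.
Definition muw := - (Z / (q * B)).
Definition gae := J * (E p + g / B * (q * W p + q * (Z + g * q) * E p)).
Definition gaw := J * (g / B * (q * E p - Z / q * W p)).
Definition sie := q * W p + q * (Z + g * q) * E p.
Definition siw := q * E p - Z / q * W p.
Definition kae := - (g * (2 * Z + g * q) / B ^+ 2).
Definition kaw := - (g * (g * Z + 2 * q) / (q * B ^+ 2)).
Definition DD := J * g / (2 * B).
Definition k11 := g / 2 * J * mue.
Definition k12 := g / 2 * J * muw.
Definition k13 : R := 0.
Definition k21 := g / 2 * gae * mue + J / 2 * sie * kae + DD * q * E p.
Definition k22 := g / 2 * gae * muw + J / 2 * sie * kaw + DD * (W p / q + E p * (Z / q + 2 * g)).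
Definition k23 := DD * q.
Definition k31 := g / 2 * gaw * mue + J / 2 * siw * kae - DD * W p / q.
Definition k32 := g / 2 * gaw * muw + J / 2 * siw * kaw + DD * (E p / q + Z * W p / q ^+ 3).
Definition k33 := - (DD * Z / q).
Definition k0 := DD * (q * E p - Z / q * W p).
End Coef.

Definition Cl (p : 'I_n.+1) : R := (n.+1)%:R * g / 2 * ((q * E p - Z * W p / q) / B).

Lemma Clow_eq p : Clow r g x p = Cl p.
Proof.
have J0 := J0; have q0 := q0; have B0 := B0.
have B0' : B != 0 by exact: lt0r_neq0 Bpos.
rewrite /Clow.
rewrite (eq_bigr (fun t => \sum_(s < n.+1) GI t s *
     (k11 * (RH p t * E s) + k12 * (RH p t * W s) + k13 * (RH p t * RH p s)
    + k21 p * (E t * E s) + k22 p * (E t * W s) + k23 * (E t * RH p s)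
    + k31 p * (W t * E s) + k32 p * (W t * W s) + k33 * (W t * RH p s)
    + k0 p * RH t s))); last first.
  move=> t _; apply: eq_bigr => s _.
  rewrite ginv_eq (Cart_eq rsym g2 p t s hq); congr (_ * _).
  rewrite /Cx /Cal /Gal /Sal /dSal /mal /k11 /k12 /k13 /k21 /k22 /k23 /k31 /k32 /k33 /k0.
  rewrite /mue /muw /gae /gaw /sie /siw /kae /kaw /DD /e /w /rh.
  by field; rewrite ?J0 ?q0 ?B0'.
rewrite dsum33 /GI !HB_comb trace_comb TPi Tuu Tue Teu Tee.
rewrite !HBPI_rh !HBPI_e !HBPI_w.
rewrite !dt_u_rh !dt_u_e !dt_u_w !dt_e_rh !dt_e_e !dt_e_w.
rewrite /Cl /k11 /k12 /k13 /k21 /k22 /k23 /k31 /k32 /k33 /k0.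
rewrite /mue /muw /gae /gaw /sie /siw /kae /kaw /DD /c1 /c2 /c3.
rewrite -[n.+1]addn1 natrD.
rewrite /Bf in B0 *; by field; rewrite ?J0 ?q0 ?B0.
Qed.

Definition be1 := (n.+1)%:R * g / 2 * (q / B).
Definition be2 := - ((n.+1)%:R * g / 2 * (Z / (q * B))).
Definition gme := J^-1 * (be1 + c2 * (be2 * q ^+ 2) + c3 * be1).
Definition gmu := J^-1 * (be2 + c1 * (be2 * q ^+ 2) + c2 * be1).
Definition Cu (p : 'I_n.+1) : R := gme * E p + gmu * U p.

Lemma Cl_lin t : Cl t = be1 * E t + be2 * W t.
Proof.
have q0 := q0; have B0' : B != 0 by exact: lt0r_neq0 Bpos.
rewrite /Cl /be1 /be2; by field; rewrite ?q0 ?B0'.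
Qed.

Lemma Cup_eq p : Cup r g x p = Cu p.
Proof.
have J0 := J0; have q0 := q0; have B0' : B != 0 by exact: lt0r_neq0 Bpos.
rewrite /Cup (eq_bigr (fun t => (J^-1 * PI p t + J^-1 * (c1 * U p + c2 * E p) * U t
      + J^-1 * (c2 * U p + c3 * E p) * E t) * (be1 * E t + be2 * W t + 0 * E t))); last first.
  move=> t _; rewrite ginv_eq Clow_eq Cl_lin /GI; ring.
rewrite sum33 /dt.
have -> : \sum_(t < n.+1) PI p t * E t = E p.
  rewrite -(K4 r); apply: eq_bigr => t _; by rewrite (Pi_sym rsym) mulrC.
have -> : \sum_(t < n.+1) PI p t * W t = U p.
  rewrite -(K7 x rsym runit p); apply: eq_bigr => t _; by rewrite (Pi_sym rsym) mulrC.
rewrite -!/(dt _ _) dt_u_e dt_u_w dt_e_e dt_e_w.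
rewrite /Cu /gme /gmu; ring.
Qed.

Lemma Csq_eq : Csq r g x = (n.+1)%:R ^+ 2 / (4 * (B * J)) * g ^+ 2.
Proof.
have J0 := J0; have q0 := q0; have B0 := B0.
rewrite /Csq (eq_bigr (fun t => (be1 * E t + be2 * W t + 0 * E t) * (gme * E t + gmu * U t + 0 * E t))); last first.
  by move=> t _; rewrite Clow_eq Cup_eq Cl_lin /Cu; ring.
rewrite sum33 -!/(dt _ _) dt_e_e dt_e_u dt_w_e dt_w_u.
rewrite /gme /gmu /be1 /be2 /c1 /c2 /c3.
rewrite /Bf in B0 *; by field; rewrite ?J0 ?q0 ?B0.
Qed.

End M.

End Aux.
Import Aux.
Unset Implicit Arguments. Set Strict Implicit. Set Printing Implicit Defensive.

Lemma posdef_unit (R : realType) (n : nat) (r : 'M[R]_n) :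
  sym_posdef r -> r \in unitmx.
Proof.
move=> [_ hp]; rewrite unitmxE unitfE; apply/negP => /det0P [v v0 vr].
have := hp v v0; by rewrite vr mul0mx mxE ltxx.
Qed.

Theorem theorem2p1 (R : realType) (n : nat) (r : 'M[R]_n) (g : R) (x : 'rV[R]_(n.+1)) :
  (1 <= n)%N -> sym_posdef r -> -2 < g < 2 -> 0 < qf r x ->
  Csq r g x = (n.+1)%:R ^+ 2 / (4 * Kf r g x ^+ 2) * g ^+ 2 /\
  (g != 0 -> forall p q s : 'I_n.+1,
     Cart r g x p q s =
       (n.+1)%:R^-1 * (hang r g x p q * Clow r g x s + hang r g x p s * Clow r g x q
                       + hang r g x q s * Clow r g x p
                       - (Csq r g x)^-1 * (Clow r g x p * Clow r g x q * Clow r g x s))).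
Proof.
move=> _ hr g2 hq.
have runit := @posdef_unit _ _ _ hr.
have rsym : r^T = r by case: hr.
have K2e : Kf r g x ^+ 2 = Bf r g x * J2 r g x := K2_eq g2 hq.
have J0 := J0 r g x; have q0 := q0 hq; have B0 := B0 g2 hq.
split.
  rewrite (Csq_eq rsym runit g2 hq); congr (_ / (4 * _) * _); exact: esym K2e.
move=> gn0 p q s.
rewrite /hang /Rlow !(gmet_eq rsym g2 _ _ hq) !(pdK2 rsym g2 _ hq) (K2_eq g2 hq).
rewrite !(Clow_eq rsym runit g2 hq) (Csq_eq rsym runit g2 hq) (Cart_eq rsym g2 p q s hq).
rewrite /Cl /Cx /Cal /Gx /Gal /Sal /dSal /mal /E1f.
have hNe : (n.+1)%:R = n%:R + 1 :> R by rewrite natr1.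
rewrite !hNe.
have hN : n%:R + 1 != 0 :> R.
  by rewrite natr1 pnatr_eq0.
rewrite /e /w /wv /eN.
rewrite /Bf in B0 *; by field; rewrite ?J0 ?q0 ?B0 ?hN ?gn0.
Qed.
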